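(* Let $\varphi:\mathbb{N}\to[1,\infty)$ be a function. Suppose the random walk on $X$ induced by $\mu$ admits a Lyapunov function $V$ with contraction factor $\alpha<1$ (i.e. $\pi(\mu)V\le\alpha V+\beta$ for some $\beta\ge0$), and set $K_n=V^{-1}([0,\varphi(n)])$. (i) If $\lambda(\varphi)<\log(\alpha^{-1})$, then the random walk is $(K_n)_n$-uniformly recurrent; moreover $n_0$ in that definition can be chosen independently of $\epsilon$. (ii) If $\varphi$ has sub-exponential growth, then the random walk is $(K_n)_n$-uniformly recurrent on average.
   Context: Standing assumptions: $G$ is a locally compact $\sigma$-compact metrizable group acting ergodically on a locally compact $\sigma$-compact metrizable space $X$ with a $G$-invariant probability measure $m_X$; $\mu$ is a Borel probability measure on $G$; $\pi(\mu)F(x)=\int_G F(gx)\,d\mu(g)$ for nonnegative measurable $F$; $\mu^{*n}*\delta_x$ is the push-forward of $\mu^{\otimes n}\otimes\delta_x$ under $(g_n,\dots,g_1,x)\mapsto g_n\cdots g_1x$. A Lyapunov function is a proper continuous $V:X\to[0,\infty)$ with constants $\alpha<1$, $\beta\ge0$ such that $\pi(\mu)V\le\alpha V+\beta$ pointwise. For subsets $K_n\subset X$, the random walk is $(K_n)_n$-uniformly recurrent if for every $\epsilon>0$ there are $n_0\in\mathbb{N}$ and a compact $M\subset X$ with $\mu^{*n}*\delta_x(M)\ge1-\epsilon$ for all $n\ge n_0$ and $x\in K_n$; it is $(K_n)_n$-uniformly recurrent on average if the same holds with $\frac1n\sum_{k=0}^{n-1}\mu^{*k}*\delta_x$ in place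 of $\mu^{*n}*\delta_x$. The Lyapunov exponent of $\varphi$ is $\lambda(\varphi)=\limsup_{n\to\infty}\frac1n\log\varphi(n)$; $\varphi$ has sub-exponential growth if $\lambda(\varphi)=0$. *)

(* Defs.v *)
From HB Require Import structures.
From mathcomp Require Import all_boot all_order all_algebra.
From mathcomp Require Import all_classical all_reals all_analysis.
Set Implicit Arguments. Unset Strict Implicit. Unset Printing Implicit Defensive.
Import Order.TTheory GRing.Theory Num.Theory.
Import numFieldNormedType.Exports.
Local Open Scope classical_set_scope.
Local Open Scope ring_scope.

Definition Borel (T : ptopologicalType) := g_sigma_algebraType (@open T).

Section Defs.
Context (R : realType).

Definition metrizable_space (T : topologicalType) : Prop :=
  exists d : T -> T -> R,
    [/\ forall x y, 0 <= d x y,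
        forall x y, d x y = 0 <-> x = y,
        forall x y, d x y = d y x,
        forall x y z, d x z <= d x y + d y z &
        forall A : set T, open A <->
          (forall x, A x -> exists2 e : R, 0 < e & [set y | d x y < e] `<=` A)].

Definition sigma_compact_space (T : topologicalType) : Prop :=
  exists K : nat -> set T, (forall n, compact (K n)) /\ \bigcup_n K n = setT.

Definition lcsc_metrizable (T : topologicalType) : Prop :=
  [/\ locally_compact [set: T], sigma_compact_space T & metrizable_space T].

Definition topological_group (G : topologicalType)
  (mul : G -> G -> G) (inv : G -> G) (one : G) : Prop :=
  [/\ forall a b c, mul a (mul b c) = mul (mul a b) c,
      forall a, mul one a = a /\ mul a one = a,
      forall a, mul (inv a) a = one /\ mul a (inv a) = one,
      continuous (fun p : G * G => mul p.1 p.2) &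
      continuous inv].

Definition continuous_action (G X : topologicalType)
  (mul : G -> G -> G) (one : G) (act : G -> X -> X) : Prop :=
  [/\ forall x, act one x = x,
      forall g h x, act (mul g h) x = act g (act h x) &
      continuous (fun p : G * X => act p.1 p.2)].

Definition invariant_ergodic (G X : ptopologicalType) (act : G -> X -> X)
  (m : probability (Borel X) R) : Prop :=
  (forall g (A : set (Borel X)), measurable A -> m (act g @^-1` A) = m A) /\
  (forall A : set (Borel X), measurable A -> (forall g, act g @^-1` A = A) ->
     m A = 0%E \/ m A = 1%E).

Definition proper_map (X : topologicalType) (V : X -> R) : Prop :=
  forall K : set R, compact K -> compact (V @^-1` K).

Definition lyapunov (G X : ptopologicalType) (act : G -> X -> X)
  (mu : probability (Borel G) R) (V : X -> R) (alpha beta : R) : Prop :=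
  [/\ (forall x, 0 <= V x) /\ continuous V, proper_map V, alpha < 1, 0 <= beta &
      forall x : X, (\int[mu]_(g in [set: Borel G]) (V (act g x))%:E <=
                    (alpha * V x + beta)%:E)%E].

(** mu^{*n} * delta_x, as a set function on X, via iterated integration
    (integrating out g_1 first):
    mu^{*0}*delta_x (A) = delta_x(A),
    mu^{*(n+1)}*delta_x (A) = int mu^{*n}*delta_{g x}(A) dmu(g). *)
Fixpoint conv_dirac (G X : ptopologicalType) (act : G -> X -> X)
  (mu : probability (Borel G) R) (n : nat) (x : X) (A : set X) : \bar R :=
  match n with
  | 0 => (\1_A x)%:E
  | n'.+1 => (\int[mu]_(g in [set: Borel G]) conv_dirac act mu n' (act g x) A)%E
  end.

Definition uniformly_recurrent (G X : ptopologicalType) (act : G -> X -> X)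
  (mu : probability (Borel G) R) (K : nat -> set X) : Prop :=
  forall eps : R, 0 < eps -> exists n0 : nat, exists2 M : set X, compact M &
    forall n, (n0 <= n)%N -> forall x, K n x ->
      ((1 - eps)%:E <= conv_dirac act mu n x M)%E.

Definition uniformly_recurrent_on_average (G X : ptopologicalType)
  (act : G -> X -> X) (mu : probability (Borel G) R) (K : nat -> set X) : Prop :=
  forall eps : R, 0 < eps -> exists n0 : nat, exists2 M : set X, compact M &
    forall n, (n0 <= n)%N -> forall x, K n x ->
      ((1 - eps)%:E <= (n%:R^-1)%:E * \sum_(k < n) conv_dirac act mu k x M)%E.

Definition lyap_exp (phi : nat -> R) : \bar R :=
  limn_esup (fun n => (ln (phi n) / n%:R)%:E).

End Defs.

(* Main.v *)
Require Import Defs.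
From HB Require Import structures.
From mathcomp Require Import all_boot all_order all_algebra.
From mathcomp Require Import all_classical all_reals all_analysis.
From mathcomp Require Import measurable_realfun.
From mathcomp Require Import ring lra.
Import Order.TTheory GRing.Theory Num.Theory.
Import numFieldNormedType.Exports.
Local Open Scope classical_set_scope.
Local Open Scope ring_scope.
Import HBNNSimple.

Lemma integral_mono d (T : measurableType d) (R : realType)
  (mu : {measure set T -> \bar R}) (f g : T -> \bar R) :
  (forall x, (f x <= g x)%E) -> (\int[mu]_x f x <= \int[mu]_x g x)%E.
Proof.
move=> fg; rewrite /integral !patch_setT.
have fg' : {in setT, forall x, (f x <= g x)%E} by move=> x _; exact: fg.
apply: leeB.
  apply: ereal_sup_le => _ [h /= hf <-]; 
  exists h => //= x; apply: (le_trans (hf x)).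
  by apply: (funepos_le fg'); rewrite in_setT.
apply: ereal_sup_le => _ [h /= hf <-]; 
exists h => //= x; apply: (le_trans (hf x)).
by apply: (funeneg_le fg'); rewrite in_setT.
Qed.

Lemma meas_cont (R : realType) (G : ptopologicalType) (f : G -> R) :
  continuous f -> measurable_fun [set: Borel G] f.
Proof.
move=> /continuousP cf; apply: (measurability _ (measurable_realfun.RGenOpens.measurableE R)).
move=> _ [_ [a [b ->]] <-]; apply: measurableI => //.
apply: sub_sigma_algebra; apply: cf; exact: interval_open.
Qed.

Lemma int_lin (R : realType) (G : ptopologicalType) (mu : probability (Borel G) R)
  (f : G -> R) (c k A : R) : continuous f -> (forall g, 0 <= f g) -> 0 <= k ->
  (\int[mu]_(g in [set: Borel G]) (f g)%:E <= A%:E)%E ->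
  ((c - k * A)%:E <= \int[mu]_(g in [set: Borel G]) ((c - k * f g)%:E))%E.
Proof.
move=> cf f0 k0 fA.
have mf := @meas_cont _ _ f cf.
have I0 : (0 <= \int[mu]_(g in [set: Borel G]) (f g)%:E)%E.
  by apply: integral_ge0 => g _; rewrite lee_fin.
have If : mu.-integrable [set: Borel G] (EFin \o f).
  apply/integrableP; split; first exact/measurable_EFinP.
  under eq_integral => g _ do rewrite /= ger0_norm ?f0 //.
  by apply: le_lt_trans fA _; exact: ltry.
have fin : (\int[mu]_(g in [set: Borel G]) (f g)%:E = (fine (\int[mu]_(g in [set: Borel G]) (f g)%:E))%:E)%E.
  by rewrite fineK // ge0_fin_numE // (le_lt_trans fA) // ltry.
under eq_integral => g _ do rewrite EFinB.
have Ic : mu.-integrable [set: Borel G] (EFin \o cst c).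
  exact: (finite_measure_integrable_cst mu c measurableT).
have Ikf : mu.-integrable [set: Borel G] (EFin \o (fun g : Borel G => k * f g)).
  exact: (integrableZl measurableT k If).
rewrite (integralB_EFin measurableT Ic Ikf).
rewrite -/(cst c%:E) integral_cst //.
rewrite [X in (c%:E * X)%E](_ : _ = 1%E); last exact: probability_setT.
rewrite mule1.
under eq_integral => g _ do rewrite EFinM.
rewrite integralZl // fin -EFinM -EFinB lee_fin lerD2l lerN2.
apply: ler_wpM2l => //; rewrite -lee_fin -fin //.
Qed.

Lemma cont_act (G X : ptopologicalType) (act : G -> X -> X) x :
  continuous (fun p : G * X => act p.1 p.2) -> continuous (fun g => act g x).
Proof.
move=> ac g.
apply: (@continuous_comp _ _ _ (fun g : G => (g, x)) (fun p : G * X => act p.1 p.2)); last exact: ac.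
apply: cvg_pair; [exact: cvg_id | exact: cvg_cst].
Qed.

Lemma conv_bound (R : realType) (G X : ptopologicalType) (act : G -> X -> X)
  (mu : probability (Borel G) R) (V : X -> R) (alpha beta Rm : R) :
  (forall x, 0 <= V x) -> continuous V ->
  continuous (fun p : G * X => act p.1 p.2) -> 0 < alpha -> alpha < 1 -> 0 < Rm ->
  (forall x : X, (\int[mu]_(g in [set: Borel G]) (V (act g x))%:E <=
                    (alpha * V x + beta)%:E)%E) ->
  forall n x, ((1 - (alpha ^+ n * V x + beta / (1 - alpha) * (1 - alpha ^+ n)) / Rm)%:E
     <= conv_dirac act mu n x [set y | (V y <= Rm)%R])%E.
Proof.
move=> V0 Vc ac a0 a1 Rm0 Hly n; elim: n => [|n IH] x /=.
  rewrite expr0 subrr mulr0 addr0 mul1r lee_fin /indic.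
  have [xM|xM] := boolP (x \in [set y | V y <= Rm]).
    by rewrite lerBlDr lerDl divr_ge0 // ltW.
  have Hx : Rm < V x by rewrite ltNge; apply: contra xM => h; rewrite in_setE.
  by rewrite subr_le0 ler_pdivlMr // mul1r ltW.
eapply le_trans; last by apply: integral_mono => g; exact: IH.
set B := beta / (1 - alpha).
have -> : (fun g : Borel G => ((1 - (alpha ^+ n * V (act g x) + B * (1 - alpha ^+ n)) / Rm)%:E)) =
  (fun g : Borel G => ((1 - B * (1 - alpha ^+ n) / Rm) - (alpha ^+ n / Rm) * V (act g x))%:E).
  by apply: funext => g; congr (_%:E); field; rewrite gt_eqF.
apply: le_trans; last first.
  apply: (@int_lin R G mu (fun g => V (act g x))).
  - move=> g; apply: (@continuous_comp _ _ _ (fun g => act g x) V); [exact: cont_act | exact: Vc].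
  - by move=> g; apply: V0.
  - by rewrite divr_ge0 // ?exprn_ge0 // ltW.
  - exact: Hly.
rewrite lee_fin le_eqVlt; apply/orP; left; apply/eqP.
have a1' : 1 - alpha != 0 by rewrite subr_eq0 gt_eqF.
rewrite /B exprS; field; rewrite a1' gt_eqF //.
Qed.

Lemma conv_ge0 (R : realType) (G X : ptopologicalType) (act : G -> X -> X)
  (mu : probability (Borel G) R) n x (M : set X) :
  (0 <= conv_dirac act mu n x M)%E.
Proof.
elim: n x => [|n IH] x /=; first by rewrite lee_fin /indic ler0n.
by apply: integral_ge0 => g _; exact: IH.
Qed.

Lemma Mcompact (R : realType) (X : ptopologicalType) (V : X -> R) (Rm : R) :
  (forall x, 0 <= V x) -> proper_map V -> compact [set y | V y <= Rm].
Proof.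
move=> V0 Vp.
have -> : [set y | V y <= Rm] = V @^-1` [set r | r \in `[0, Rm]].
  apply/seteqP; split => y /=; rewrite in_itv /=.
    by move=> h; rewrite V0 h.
  by case/andP.
apply: Vp; exact: segment_compact.
Qed.

Lemma pow_bound (R : realType) (alpha p : R) m : 0 < alpha -> 0 < p ->
  ln p <= ln (alpha^-1) *+ m -> alpha ^+ m * p <= 1.
Proof.
move=> a0 p0 h.
rewrite -lnXn ?invr_gt0 // in h.
rewrite ler_ln ?posrE ?exprn_gt0 ?invr_gt0 // in h.
have -> : (1 : R) = alpha ^+ m * alpha^-1 ^+ m by rewrite -exprMn mulfV ?gt_eqF // expr1n.
by apply: ler_wpM2l => //; rewrite exprn_ge0 // ltW.
Qed.

Lemma sum_cnt (R : realType) n m (a : R) : 0 <= a ->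
  (n%:R - m%:R) * a <= \sum_(k < n) (if (m <= k)%N then a else 0).
Proof.
move=> a0; elim: n => [|n IH].
  by rewrite big_ord0 sub0r mulNr oppr_le0 mulr_ge0.
rewrite big_ord_recr /=.
have S0 : 0 <= \sum_(k < n) (if (m <= k)%N then a else 0).
  by apply: sumr_ge0 => i _; case: ifP.
case: leqP => h.
  rewrite -addn1 natrD; nra.
have : (n + 1)%:R <= m%:R :> R by rewrite ler_nat addn1.
rewrite -addn1 natrD => h'; nra.
Qed.

Lemma esup_lt (R : realType) (u : nat -> \bar R) c : (limn_esup u < c)%E ->
  exists N, forall n, (N <= n)%N -> (u n < c)%E.
Proof.
rewrite /limn_esup /limf_esup => /ereal_inf_lt [_ [V HV <-]] Hc.
case: HV => N _ HN; exists N => n Nn; apply: le_lt_trans Hc.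
by apply: ereal_sup_ubound; exists n => //; apply: HN.
Qed.

Theorem proposition4p12 (R : realType) (G X : ptopologicalType)
  (mul : G -> G -> G) (inv : G -> G) (one : G) (act : G -> X -> X)
  (mX : probability (Borel X) R) (mu : probability (Borel G) R)
  (phi : nat -> R) (V : X -> R) (alpha beta : R) :
  lcsc_metrizable R G -> topological_group mul inv one ->
  lcsc_metrizable R X -> continuous_action mul one act ->
  invariant_ergodic act mX ->
  (forall n, 1 <= phi n) ->
  0 < alpha -> lyapunov act mu V alpha beta ->
  let K := fun n => [set x | V x <= phi n] in
  ((lyap_exp phi < (ln (alpha^-1))%:E)%E ->
     uniformly_recurrent act mu K /\
     exists n0 : nat, forall eps : R, 0 < eps -> exists2 M : set X, compact M &
       forall n, (n0 <= n)%N -> forall x, K n x ->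
         ((1 - eps)%:E <= conv_dirac act mu n x M)%E) /\
  (lyap_exp phi = 0%E -> uniformly_recurrent_on_average act mu K).
Proof.
move=> _ _ _ [_ _ ac] _ phi1 a0 [[V0 Vc] Vp a1 b0 Hly] K.
set B := beta / (1 - alpha).
have B0 : 0 <= B by rewrite divr_ge0 // subr_ge0 ltW.
have cb : forall Rm, 0 < Rm -> forall n x,
    ((1 - (alpha ^+ n * V x + B) / Rm)%:E <=
      conv_dirac act mu n x [set y | (V y <= Rm)%R])%E.
  move=> Rm Rm0 n x.
  apply: le_trans (@conv_bound R G X act mu V alpha beta Rm V0 Vc ac a0 a1 Rm0 Hly n x).
  rewrite lee_fin lerD2l lerN2 ler_pM2r ?invr_gt0 // lerD2l.
  have h := mulr_ge0 B0 (exprn_ge0 n (ltW a0)).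
  rewrite /B in h B0 *; rewrite mulrBr mulr1; lra.
split.
  move=> hl.
  have [N HN] := @esup_lt R _ _ hl.
  have key : forall n, (maxn N 1 <= n)%N -> alpha ^+ n * phi n <= 1.
    move=> n; rewrite geq_max => /andP[Nn n1].
    apply: pow_bound => //; first by apply: lt_le_trans (phi1 n).
    have := HN n Nn; rewrite lte_fin ltr_pdivrMr ?ltr0n // => h.
    by rewrite -mulr_natr ltW.
  have main : forall eps : R, 0 < eps -> exists2 M : set X, compact M &
      forall n, (maxn N 1 <= n)%N -> forall x, K n x ->
        ((1 - eps)%:E <= conv_dirac act mu n x M)%E.
    move=> eps e0; set Rm := (1 + B) / eps.
    have Rm0 : 0 < Rm by rewrite divr_gt0 // ltr_wpDr.
    exists [set y | (V y <= Rm)%R]; first exact: Mcompact.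
    move=> n hn x Kx; apply: le_trans (cb Rm Rm0 n x).
    rewrite lee_fin lerD2l lerN2 ler_pdivrMr // /Rm.
    have h1 : alpha ^+ n * V x <= 1.
      apply: le_trans (key n hn); apply: ler_wpM2l; last exact: Kx.
      by rewrite exprn_ge0 // ltW.
    rewrite mulrCA mulfV ?gt_eqF // mulr1; lra.
  split; last by exists (maxn N 1).
  by move=> eps e0; exists (maxn N 1); exact: main.
move=> hl0 eps e0.
set e := Num.min eps 1.
have e0' : 0 < e by rewrite /e lt_min e0 ltr01.
have he1 : e <= 1 by rewrite /e ge_min lexx orbT.
have hee : e <= eps by rewrite /e ge_min lexx.
set L := ln (alpha^-1).
have L0 : 0 < L by apply: ln_gt0; rewrite invf_gt1.
set c := e / 4 * L.
have c0 : 0 < c by rewrite /c mulr_gt0 // divr_gt0.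
have hl' : (lyap_exp phi < c%:E)%E by rewrite hl0 lte_fin.
have [N HN] := @esup_lt R _ _ hl'.
set n1 := (Num.Def.trunc (4 / e)).+1.
have hn1 : 4 / e < n1%:R by rewrite -truncn_le_nat.
set Rm := 2 * (1 + B) / e.
have Rm0 : 0 < Rm by rewrite /Rm divr_gt0 // mulr_gt0 // ltr_wpDr.
exists (maxn N n1); exists [set y | (V y <= Rm)%R]; first exact: Mcompact.
move=> n hn x Kx; rewrite geq_max in hn; case/andP: hn => Nn n1n.
have hnr : 4 / e < n%:R by apply: lt_le_trans hn1 _; rewrite ler_nat.
have n0 : 0 < n%:R :> R by apply: lt_trans hnr; rewrite divr_gt0.
have p0 : 0 < phi n by apply: lt_le_trans (phi1 n).
set y := ln (phi n) / L.
have y0 : 0 <= y by apply: divr_ge0; [exact: ln_ge0 (phi1 n) | exact: ltW].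
set m := (Num.Def.trunc y).+1.
have hym : y < m%:R by rewrite -truncn_le_nat.
have hmy : m%:R <= y + 1 by rewrite /m -addn1 natrD lerD2r truncn_le.
have hy : y < e / 4 * n%:R.
  have := HN n Nn; rewrite lte_fin ltr_pdivrMr // => h.
  rewrite /y ltr_pdivrMr //.
  by have -> : e / 4 * n%:R * L = c * n%:R by rewrite /c; ring.
have h4 : 4 < n%:R * e by rewrite -ltr_pdivrMr.
have h1 : 1 <= e / 4 * n%:R.
  have -> : e / 4 * n%:R = (n%:R * e) / 4 by field.
  by rewrite ler_pdivlMr // mul1r ltW.
have hm : m%:R <= e / 2 * n%:R.
  apply: le_trans hmy _.
  have -> : e / 2 * n%:R = e / 4 * n%:R + e / 4 * n%:R by field.
  by apply: lerD => //; exact: ltW.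
have hpow : alpha ^+ m * phi n <= 1.
  apply: pow_bound => //; rewrite -mulr_natr; apply: ltW.
  by rewrite mulrC -ltr_pdivrMr.
have hk : forall k, (m <= k)%N -> alpha ^+ k * V x <= 1.
  move=> k mk; rewrite -(subnKC mk) exprD; apply: le_trans hpow.
  rewrite -mulrA; apply: ler_wpM2l; first by rewrite exprn_ge0 // ltW.
  apply: le_trans (Kx : V x <= phi n).
  by apply: ler_piMl => //; rewrite exprn_ile1 // ltW.
apply: (@le_trans _ _ ((n%:R^-1)%:E *
   (\sum_(k < n) (if (m <= k)%N then 1 - e / 2 else 0))%:E)%E); last first.
  apply: lee_wpmul2l; first by rewrite lee_fin invr_ge0 ltW.
  rewrite -sumEFin; apply: lee_sum => k _; case: ifP => mk; last exact: conv_ge0.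
  apply: le_trans (cb Rm Rm0 k x).
  rewrite lee_fin lerD2l lerN2 ler_pdivrMr //.
  have -> : e / 2 * Rm = 1 + B by rewrite /Rm; field; rewrite gt_eqF.
  by rewrite lerD2r hk.
rewrite -EFinM lee_fin.
have ha : 0 <= 1 - e / 2.
  rewrite subr_ge0 ler_pdivrMr // mul1r; apply: le_trans he1 _; by rewrite ler1n.
have hS := @sum_cnt R n m (1 - e / 2) ha.
apply: (@le_trans _ _ (1 - e)); first by rewrite lerD2l lerN2.
rewrite ler_pdivlMl //; apply: le_trans hS.
have h5 : 0 <= (e / 2 * n%:R - m%:R) * (1 - e / 2).
  by apply: mulr_ge0; rewrite subr_ge0 //; lra.
have h6 : 0 <= n%:R * e * e / 4 by rewrite !mulr_ge0 // ltW.
rewrite -subr_ge0.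
have -> : (n%:R - m%:R) * (1 - e / 2) - n%:R * (1 - e) =
  (e / 2 * n%:R - m%:R) * (1 - e / 2) + n%:R * e * e / 4 by field.
exact: addr_ge0.
Qed.
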